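(* Let $\alpha,\beta>0$, $\mu>0$, $\lambda_1,\lambda_2\ge 0$ with $\lambda_1>\lambda_2$, and fix a real $\omega>0$. Let $$\Delta(s,\omega)=\det(Q+sR-\omega I)=(\lambda_1-\mu)(\lambda_2-\mu)s^2-\big[(\lambda_1-\mu)(\omega+\beta)+(\lambda_2-\mu)(\omega+\alpha)\big]s+\omega(\omega+\alpha+\beta),$$ and, when $(\lambda_1-\mu)(\lambda_2-\mu)\neq 0$, let $$s_{1,2}(\omega)=\frac{b\pm\sqrt{b^2-4\omega(\omega+\alpha+\beta)(\lambda_1-\mu)(\lambda_2-\mu)}}{2(\lambda_1-\mu)(\lambda_2-\mu)},\qquad b=(\lambda_1-\mu)(\omega+\beta)+(\lambda_2-\mu)(\omega+\alpha),$$ with $+$ for $s_1$ and $-$ for $s_2$. Then: 1. If $\lambda_2>\mu$ (hence $\lambda_1>\mu$), no starvation occurs (for every initial buffer level $x>0$, $X(t)>0$ for all $t\ge 0$). 2. If $\lambda_2<\mu<\lambda_1$, then $\mathrm{Re}(s_2(\omega))>0$ and $\mathrm{Re}(s_1(\omega))<0$. 3. If $\lambda_2<\mu$ and $\lambda_1<\mu$, then $\mathrm{Re}(s_1(\omega))<0$ and $\mathrm{Re}(s_2(\omega))<0$. 4. If $\lambda_2=\mu$ (hence $\lambda_1>\mu$), no starvation occurs. 5. If $\lambda_1=\mu$ (hence $\lambda_2<\mu$), then $\Delta(\cdot,\omega)$ has the single root $s(\omega)=\dfrac{\omega(\omega+\alpha+\beta)}{(\lambda_2-\mu)(\omega+\alpha)}$,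 and $\mathrm{Re}(s(\omega))<0$.
   Context: Two-state Markov modulated fluid model of a playout buffer: $\{I(t),t\ge0\}$ is a continuous-time Markov chain on $\{1,2\}$ with generator $Q=\begin{pmatrix}-\beta&\beta\\ \alpha&-\alpha\end{pmatrix}$, and the rate matrix is $R=\mathrm{diag}(\lambda_2-\mu,\ \lambda_1-\mu)$, i.e. frames arrive at rate $\lambda_2$ in state 1 and $\lambda_1$ in state 2 and are played at constant rate $\mu$. The buffer content $X(t)\ge 0$ evolves as $\frac{d}{dt}X(t)=R_{I(t)I(t)}$, starting from $X(0)=x>0$. Starvation means that the buffer empties, i.e. $\tau=\inf\{t>0:X(t)=0\}<\infty$. The variable $\omega$ is the Laplace transform variable for the starvation time $\tau$; $I$ denotes the $2\times 2$ identity matrix. *)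

(* Defs.v *)
From HB Require Import structures.
From mathcomp Require Import all_boot all_algebra.
From mathcomp Require Import all_classical all_reals all_analysis.
From mathcomp Require Export complex.

Set Implicit Arguments.
Unset Strict Implicit.
Unset Printing Implicit Defensive.

Import GRing.Theory Num.Theory.
Local Open Scope ring_scope.
Local Open Scope complex_scope.

Section Fluid.
Variable R : realType.
Variables (alpha beta mu lambda1 lambda2 : R).

(* States are indexed by 'I_2: index 0 is state 1, index 1 is state 2. *)

Definition genQ : 'M[R]_2 :=
  \matrix_(i < 2, j < 2)
     if (i : nat) == 0%N then (if (j : nat) == 0%N then - beta else beta)
     else (if (j : nat) == 0%N then alpha else - alpha).

Definition rate (i : 'I_2) : R :=
  if (i : nat) == 0%N then lambda2 - mu else lambda1 - mu.

Definition rateM : 'M[R]_2 := \matrix_(i < 2, j < 2) if i == j then rate i else 0.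

Definition Delta (omega : R) (s : R[i]) : R[i] :=
  \det (map_mx (fun x => x%:C) genQ + s *: map_mx (fun x => x%:C) rateM
        - (omega%:C)%:M).

Definition bcoef (omega : R) : R :=
  (lambda1 - mu) * (omega + beta) + (lambda2 - mu) * (omega + alpha).

Definition pcoef : R := (lambda1 - mu) * (lambda2 - mu).

Definition discr (omega : R) : R :=
  bcoef omega ^+ 2 - 4 * omega * (omega + alpha + beta) * pcoef.

Definition s1 (omega : R) : R[i] :=
  ((bcoef omega)%:C + sqrtc ((discr omega)%:C)) / ((2 * pcoef)%:C).
Definition s2 (omega : R) : R[i] :=
  ((bcoef omega)%:C - sqrtc ((discr omega)%:C)) / ((2 * pcoef)%:C).

(* Buffer content along a sample path I of the environment, started at x,
   up to the starvation time: X(t) = x + int_0^t R_{I(u)I(u)} du. *)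
Definition buffer (I : R -> 'I_2) (x t : R) : \bar R :=
  (x%:E + \int[@lebesgue_measure R]_(u in `[0%R, t]%classic) (rate (I u))%:E)%E.

Definition sample_path (I : R -> 'I_2) : Prop :=
  forall i : 'I_2, measurable (I @^-1` [set i]).

Definition no_starvation : Prop :=
  forall (I : R -> 'I_2) (x : R), sample_path I -> 0 < x ->
    forall t : R, 0 <= t -> (0 < buffer I x t)%E.

End Fluid.

(* Main.v *)
Require Import Defs.
From HB Require Import structures.
From mathcomp Require Import all_boot all_algebra.
From mathcomp Require Import all_classical all_reals all_analysis.
From mathcomp Require Import complex.
From mathcomp Require Import ring lra.
Import GRing.Theory Num.Theory.
Import order.Order.TTheory.
Local Open Scope ring_scope.

Lemma det22 (F : comNzRingType) (A : 'M[F]_2) : \det A = A 0 0 * A 1 1 - A 0 1 * A 1 0.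
Proof.
rewrite (expand_det_row _ ord0) !big_ord_recl big_ord0 /cofactor.
rewrite !det_mx11 !mxE /= expr0 expr1 addr0 mul1r mulN1r mulrN.
by congr (_ * A _ _ - A _ _ * A _ _); apply/val_inj.
Qed.
Lemma ReSq (R : rcfType) (x : R) : (0 <= x -> complex.Re (sqrtc x%:C)%C = Num.sqrt x) /\ (x < 0 -> complex.Re (sqrtc x%:C)%C = 0).
Proof.
split=> hx.
  by rewrite sqrtc_sqrtr ?lecR.
have := sqr_sqrtc x%:C%C.
case: (sqrtc _) => a b /= [] h1 h2.
have h3 : (a ^+ 2) * (x - a ^+ 2) = 0.
  rewrite -h1; have : a * b = 0 by lra. move=> e.
  transitivity (- (a * b) ^+ 2); first by ring.
  by rewrite e expr0n oppr0.
move/eqP: h3; rewrite mulf_eq0 => /orP [|]; first by rewrite sqrf_eq0 => /eqP.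
move=> /eqP h; have : 0 <= a ^+ 2 by apply: sqr_ge0. lra.
Qed.

Lemma Re_div (R : rcfType) (u : R[i]) (r : R) : complex.Re (u / r%:C)%C = complex.Re u / r.
Proof. case: u => a b; rewrite -fmorphV /=; ring. Qed.

Lemma ReD (R : rcfType) (c : R) (u : R[i]) : complex.Re (c%:C + u)%C = c + complex.Re u.
Proof. by case: u => a b /=. Qed.
Lemma ReB (R : rcfType) (c : R) (u : R[i]) : complex.Re (c%:C - u)%C = c - complex.Re u.
Proof. by case: u => a b /=. Qed.

Lemma nostarv (R : realType) (mu l1 l2 : R) : mu <= l2 -> l2 < l1 -> no_starvation mu l1 l2.
Proof.
move=> h1 h2 I x _ x0 t _; rewrite /buffer.
apply: (lt_le_trans _ (leeDl _ _)); first by rewrite lte_fin.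
apply: integral_ge0 => u _; rewrite lee_fin /rate; case: ifP => _; lra.
Qed.

Theorem proposition1 (R : realType) (alpha beta mu lambda1 lambda2 omega : R) :
  0 < alpha -> 0 < beta -> 0 < mu -> 0 <= lambda1 -> 0 <= lambda2 ->
  lambda2 < lambda1 -> 0 < omega ->
  [/\ (mu < lambda2 -> no_starvation mu lambda1 lambda2),
      (lambda2 < mu < lambda1 ->
         0 < complex.Re (s2 alpha beta mu lambda1 lambda2 omega) /\
         complex.Re (s1 alpha beta mu lambda1 lambda2 omega) < 0),
      (lambda2 < mu -> lambda1 < mu ->
         complex.Re (s1 alpha beta mu lambda1 lambda2 omega) < 0 /\
         complex.Re (s2 alpha beta mu lambda1 lambda2 omega) < 0),
      (lambda2 = mu -> no_starvation mu lambda1 lambda2)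
    & (lambda1 = mu ->
         let s0 := omega * (omega + alpha + beta) / ((lambda2 - mu) * (omega + alpha)) in
         (forall s : R[i], Delta alpha beta mu lambda1 lambda2 omega s = 0 <-> s = (s0%:C)%C)
         /\ complex.Re ((s0%:C)%C) < 0)].
Proof.
move=> ha hb hm hl1 hl2 hl hw.
have hK : 0 < omega * (omega + alpha + beta) by apply: mulr_gt0 => //; lra.
split.
- by move=> h; apply: nostarv => //; lra.
- case/andP=> h2 h1.
  rewrite /s1 /s2 !Re_div ReB ReD.
  set b := bcoef _ _ _ _ _ _; set p := pcoef _ _ _.
  have hp : p < 0 by rewrite /p /pcoef; nra.
  have hd : b ^+ 2 < discr alpha beta mu lambda1 lambda2 omega.
    rewrite /discr -/b -/p; nra.
  have hd0 : 0 <= discr alpha beta mu lambda1 lambda2 omega.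
    apply: le_trans (ltW hd); exact: sqr_ge0.
  rewrite (proj1 (ReSq _ _) hd0).
  have := sqr_sqrtr hd0; have := sqrtr_ge0 (discr alpha beta mu lambda1 lambda2 omega).
  set w := Num.sqrt _ => hw0 hw2.
  have hq : (2 * p)^-1 < 0 by rewrite invr_lt0; lra.
  have e1 : b - w < 0 by nra.
  have e2 : 0 < b + w by nra.
  split; nra.
- move=> h2 h1.
  rewrite /s1 /s2 !Re_div ReB ReD.
  set b := bcoef _ _ _ _ _ _; set p := pcoef _ _ _.
  have hp : 0 < p by rewrite /p /pcoef; nra.
  have hb0 : b < 0 by rewrite /b /bcoef; nra.
  have hq : 0 < (2 * p)^-1 by rewrite invr_gt0; lra.
  have [hd0|hd0] := leP 0 (discr alpha beta mu lambda1 lambda2 omega).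
    have hd : discr alpha beta mu lambda1 lambda2 omega < b ^+ 2.
      rewrite /discr -/b -/p; nra.
    rewrite (proj1 (ReSq _ _) hd0).
    have := sqr_sqrtr hd0; have := sqrtr_ge0 (discr alpha beta mu lambda1 lambda2 omega).
    set w := Num.sqrt _ => hw0 hw2.
    have e1 : b + w < 0 by nra.
    split; nra.
  rewrite (proj2 (ReSq _ _) hd0) addr0 subr0; split; nra.
- by move=> h; apply: nostarv => //; lra.
- move=> h1 s0; subst lambda1.
  have hc : lambda2 - mu < 0 by lra.
  have hD : (lambda2 - mu) * (omega + alpha) < 0 by nra.
  split; last first.
    by rewrite /= /s0 pmulr_rlt0 // invr_lt0.
  move=> s.
  rewrite /Delta det22 !mxE /= /rate /= subrr.
  set N := omega * (omega + alpha + beta).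
  set D := (lambda2 - mu) * (omega + alpha).
  have -> : ((- beta)%:C%C + s * (lambda2 - mu)%:C%C - omega%:C%C *+ 1) *
   ((- alpha)%:C%C + s * 0%:C%C - omega%:C%C *+ 1) -
   (beta%:C%C + s * 0%:C%C - omega%:C%C *+ 0) *
   (alpha%:C%C + s * 0%:C%C - omega%:C%C *+ 0) = N%:C%C - s * D%:C%C.
    rewrite /N /D !(rmorphM, rmorphD, rmorphB, rmorphN, rmorph0). ring.
  have hD0 : D%:C%C != 0 by rewrite fmorph_eq0 lt_eqF.
  rewrite /s0 -/N -/D [(N / D)%:C%C]rmorphM fmorphV.
  split=> [/eqP|->]; last by rewrite divfK // subrr.
  rewrite subr_eq0 => /eqP e; apply: (mulIf hD0); rewrite divfK // -e.
Qed.
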